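(* Let $n\ge r\ge1$, let $B\in\mathbb{R}^{r\times r}$ have nonnegative entries with no zero row and no zero column, let $\Theta\in\mathbb{R}^{n\times r}$ be a normalized membership matrix, and let $D_1,D_2$ be $n\times n$ diagonal matrices with positive diagonal entries such that $A=D_1\Theta B\Theta^TD_2$ has entries in $[0,1]$. Let $P$ and $Q$ be the matrices obtained by scaling the rows of $A$ and of $A^T$, respectively, so that they are row stochastic, and let $M=\Theta^TP\Theta$, $N=\Theta^TQ\Theta$. If $\beta^2<1$, then the matrix equation $$X-\frac{\beta^2}{2}\big(MXM^T+NXN^T\big)=\Theta^T(PP^T+QQ^T)\Theta$$ has a unique solution $X\in\mathbb{R}^{r\times r}$, which is symmetric positive semidefinite. Furthermore, if $B$ is invertible then $X$ is positive definite.
   Context: The nodes $\{1,\ldots,n\}$ are partitioned into $r$ nonempty blocks; $\chi^{(i)}\in\{0,1\}^n$ is the indicator vector of the $i$-th block and $n_i$ its size. The normalized membership matrix $\Theta$ has $i$-th column $\Theta e_i=\chi^{(i)}/\sqrt{n_i}$, $i=1,\ldots,r$ (so its columns are orthonormal). Thus $P=\mathrm{Diag}(A\mathbf 1)^{-1}A$ and $Q=\mathrm{Diag}(A^T\mathbf 1)^{-1}A^T$ with $\mathbf 1$ the all-ones vector. *)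

(* Defs.v *)
From HB Require Import structures.
From mathcomp Require Import all_boot all_order all_algebra.
From mathcomp Require Import reals.
Set Implicit Arguments. Unset Strict Implicit. Unset Printing Implicit Defensive.
Import Order.TTheory GRing.Theory Num.Theory.
Local Open Scope ring_scope.

(* A partition of the nodes 'I_n into r blocks is encoded by the block
   assignment blk : 'I_n -> 'I_r; blocks are nonempty iff blk is surjective. *)
Definition blocks_nonempty (n r : nat) (blk : 'I_n -> 'I_r) : Prop :=
  forall k : 'I_r, exists i : 'I_n, blk i = k.

Definition block_size (n r : nat) (blk : 'I_n -> 'I_r) (k : 'I_r) : nat :=
  #|[set i : 'I_n | blk i == k]|.

Definition Theta (R : realType) (n r : nat) (blk : 'I_n -> 'I_r) : 'M[R]_(n, r) :=
  \matrix_(i < n, k < r) ((blk i == k)%:R / Num.sqrt ((block_size blk k)%:R)).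

Definition row_normalize (R : realType) (n : nat) (A : 'M[R]_n) : 'M[R]_n :=
  invmx (diag_mx (A *m const_mx 1)^T) *m A.

Definition is_sym (R : realType) (m : nat) (X : 'M[R]_m) : Prop := X^T = X.

Definition psd (R : realType) (m : nat) (X : 'M[R]_m) : Prop :=
  is_sym X /\ forall v : 'cV[R]_m, 0 <= (v^T *m X *m v) 0 0.

Definition pd (R : realType) (m : nat) (X : 'M[R]_m) : Prop :=
  is_sym X /\ forall v : 'cV[R]_m, v != 0 -> 0 < (v^T *m X *m v) 0 0.

(* Main.v *)
Require Import Defs.
From HB Require Import structures.
From mathcomp Require Import all_boot all_order all_algebra.
From mathcomp Require Import reals ring lra.
Set Implicit Arguments. Unset Strict Implicit. Unset Printing Implicit Defensive.
Import Order.TTheory GRing.Theory Num.Theory.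
Local Open Scope ring_scope.

Lemma quadE (R : realType) m (e : 'rV[R]_m) (w : 'cV[R]_m) :
  (w^T *m diag_mx e *m w) 0 0 = \sum_j e 0 j * w j 0 ^+ 2.
Proof.
rewrite mxE; apply: eq_bigr => j _; rewrite mul_mx_diag !mxE; ring.
Qed.

Lemma quad_ge0 (R : realType) m (e : 'rV[R]_m) (w : 'cV[R]_m) :
  (forall i, 0 <= e 0 i) -> 0 <= (w^T *m diag_mx e *m w) 0 0.
Proof.
by move=> he; rewrite quadE; apply: sumr_ge0 => j _; rewrite mulr_ge0 // sqr_ge0.
Qed.

Lemma nz_entry (R : realType) m p (w : 'M[R]_(m, p)) : w != 0 -> exists i j, w i j != 0.
Proof.
move=> w0; case: (pickP (fun ij : 'I_m * 'I_p => w ij.1 ij.2 != 0)) => [[i j] h|hall].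
  by exists i, j.
move/eqP: w0; case; apply/matrixP => i j; rewrite mxE.
by move: (hall (i, j)) => /= /negbFE/eqP.
Qed.

Lemma quad_gt0 (R : realType) m (e : 'rV[R]_m) (w : 'cV[R]_m) :
  (forall i, 0 < e 0 i) -> w != 0 -> 0 < (w^T *m diag_mx e *m w) 0 0.
Proof.
move=> he w0; have [j0 [k hj]] := nz_entry w0; rewrite (ord1 k) in hj.
rewrite quadE (bigD1 j0) //=; apply: ltr_pwDl.
  by rewrite mulr_gt0 // exprn_even_gt0.
by apply: sumr_ge0 => j _; rewrite mulr_ge0 ?sqr_ge0 // ltW.
Qed.

Lemma sq_ge0 (R : realType) m (y : 'cV[R]_m) : 0 <= (y^T *m y) 0 0.
Proof.
have := @quad_ge0 _ _ (const_mx 1) y; rewrite diag_const_mx mulmx1; apply=> i.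
by rewrite mxE.
Qed.

Lemma sq_gt0 (R : realType) m (y : 'cV[R]_m) : y != 0 -> 0 < (y^T *m y) 0 0.
Proof.
have := @quad_gt0 _ _ (const_mx 1) y; rewrite diag_const_mx mulmx1; apply=> i.
by rewrite mxE.
Qed.

Lemma invmx_diag (R : realType) m (d : 'rV[R]_m) : (forall i, d 0 i != 0) ->
  invmx (diag_mx d) = diag_mx (\row_i (d 0 i)^-1).
Proof.
move=> hd.
have h : diag_mx d *m diag_mx (\row_i (d 0 i)^-1) = 1%:M.
  apply/matrixP => i j; rewrite mul_diag_mx !mxE.
  case: eqP => [->|_]; last by rewrite mulr0n mulr0.
  by rewrite !mulr1n divff.
have [u1 _] := mulmx1_unit h.
by rewrite -[invmx _]mulmx1 -h mulmxA mulVmx // mul1mx.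
Qed.

Section Conc.
Variables (R : realType) (n r : nat) (blk : 'I_n -> 'I_r) (B : 'M[R]_r) (d1 d2 : 'rV[R]_n).
Hypotheses (ne : blocks_nonempty blk) (B0 : forall k l, 0 <= B k l)
  (Brow : forall k, exists l, B k l != 0)
  (d1p : forall i, 0 < d1 0 i) (d2p : forall i, 0 < d2 0 i).

Local Notation Th := (Theta R blk).
Definition sq (k : 'I_r) : R := Num.sqrt (block_size blk k)%:R.

Lemma bs_pos k : (0 < block_size blk k)%N.
Proof. by have [i hi] := ne k; apply/card_gt0P; exists i; rewrite inE hi. Qed.

Lemma sq_pos k : 0 < sq k.
Proof. by rewrite sqrtr_gt0 ltr0n bs_pos. Qed.

Lemma sq_neq0 k : sq k != 0.
Proof. by rewrite gt_eqF // sq_pos. Qed.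

Lemma ThM m (X : 'M[R]_(r, m)) i l : (Th *m X) i l = X (blk i) l / sq (blk i).
Proof.
rewrite mxE (bigD1 (blk i)) //= big1 ?addr0 => [|k nk]; rewrite mxE.
  by rewrite eqxx mul1r mulrC.
by rewrite eq_sym (negbTE nk) mul0r mul0r.
Qed.

Lemma MTh m (X : 'M[R]_(m, r)) i j : (X *m Th^T) i j = X i (blk j) / sq (blk j).
Proof.
rewrite mxE (bigD1 (blk j)) //= big1 ?addr0 => [|k nk]; rewrite !mxE.
  by rewrite eqxx mul1r.
by rewrite eq_sym (negbTE nk) mul0r mulr0.
Qed.

Lemma Th_inj (v : 'cV[R]_r) : Th *m v = 0 -> v = 0.
Proof.
move=> h; apply/matrixP => k j; rewrite (ord1 j) mxE.
have [i hi] := ne k.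
have := congr1 (fun X : 'M[R]_(n, 1) => X i 0) h; rewrite ThM mxE hi => /eqP.
by rewrite mulf_eq0 invr_eq0 (negbTE (sq_neq0 k)) orbF => /eqP.
Qed.

Definition uu : 'cV[R]_r := \col_k sq k.

Lemma Thu : Th *m uu = const_mx 1.
Proof. by apply/matrixP => i j; rewrite ThM !mxE divff // sq_neq0. Qed.

Lemma Th1 : Th^T *m (const_mx 1 : 'cV[R]_n) = uu.
Proof.
apply/matrixP => k j; rewrite !mxE.
rewrite (eq_bigr (fun i => if blk i == k then (sq k)^-1 else 0)); last first.
  by move=> i _; rewrite !mxE mulr1; case: eqP => _; rewrite ?mul1r ?mul0r.
rewrite -big_mkcond sumr_const /=.
have -> : #|[pred i | blk i == k]| = block_size blk k by rewrite /block_size cardsE.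
rewrite -mulr_natr -[_%:R](@sqr_sqrtr R) ?ler0n // -/(sq k) expr2.
by rewrite mulrA mulVf ?sq_neq0 // mul1r.
Qed.

Definition Amat := diag_mx d1 *m Th *m B *m Th^T *m diag_mx d2.

Lemma AE i j : Amat i j = d1 0 i * (B (blk i) (blk j) / sq (blk i)) / sq (blk j) * d2 0 j.
Proof.
by rewrite /Amat mul_mx_diag mxE MTh -mulmxA mul_diag_mx mxE ThM.
Qed.

Lemma A_ge0 i j : 0 <= Amat i j.
Proof.
by rewrite AE !mulr_ge0 ?invr_ge0 // ltW // ?sq_pos.
Qed.

Definition rho : 'rV[R]_n := (Amat *m const_mx 1)^T.

Lemma rho_pos i : 0 < rho 0 i.
Proof.
rewrite !mxE.
have [l hl] := Brow (blk i); have [j hj] := ne l.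
rewrite (bigD1 j) //=; apply: ltr_pwDl.
  have Bp : 0 < B (blk i) l by rewrite lt_def hl B0.
  by rewrite [const_mx _ _ _]mxE mulr1 AE hj !mulr_gt0 ?invr_gt0 ?sq_pos.
by apply: sumr_ge0 => k _; rewrite [const_mx _ _ _]mxE mulr1 A_ge0.
Qed.

Definition Pm := row_normalize Amat.

Lemma PE : Pm = diag_mx (\row_i (rho 0 i)^-1) *m Amat.
Proof.
rewrite /Pm /row_normalize -/rho invmx_diag // => i.
by rewrite gt_eqF // rho_pos.
Qed.

Lemma P_ge0 i j : 0 <= Pm i j.
Proof.
rewrite PE mul_diag_mx mxE; apply: mulr_ge0 (A_ge0 _ _).
by rewrite mxE invr_ge0 ltW // rho_pos.
Qed.

Lemma P1 : Pm *m (const_mx 1 : 'cV[R]_n) = const_mx 1.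
Proof.
apply/matrixP => i k; rewrite (ord1 k) PE -mulmxA mul_diag_mx mxE.
have hr : rho 0 i = (Amat *m (const_mx 1 : 'cV[R]_n)) i 0 by rewrite /rho mxE.
rewrite -hr mxE mulVf ?gt_eqF ?rho_pos //.
by rewrite mxE.
Qed.

Lemma PT_inj : B \in unitmx -> forall v : 'cV[R]_r, v != 0 -> Pm^T *m Th *m v != 0.
Proof.
move=> Bu v v0.
set e : 'rV[R]_n := \row_i (d1 0 i / rho 0 i).
have De : diag_mx d1 *m diag_mx (\row_i (rho 0 i)^-1) = diag_mx e.
  apply/matrixP => i j; rewrite mul_diag_mx !mxE.
  by case: eqP => [->|_]; rewrite ?mulr1n ?mulr0n ?mulr0.
have -> : Pm^T *m Th *m v =
    diag_mx d2 *m (Th *m (B^T *m (Th^T *m (diag_mx e *m (Th *m v))))).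
  rewrite PE /Amat !trmx_mul !tr_diag_mx !trmxK -De !mulmxA.
  done.
have w0 : Th *m v != 0 by apply/eqP => /Th_inj /eqP; rewrite (negbTE v0).
have z0 : Th^T *m (diag_mx e *m (Th *m v)) != 0.
  apply/eqP => hz.
  have he : forall i, 0 < e 0 i by move=> i; rewrite mxE divr_gt0 //; exact: rho_pos.
  by have := quad_gt0 he w0; rewrite trmx_mul -!mulmxA hz mulmx0 mxE ltxx.
have y0 : B^T *m (Th^T *m (diag_mx e *m (Th *m v))) != 0.
  apply/eqP => hy; move/eqP: z0; apply.
  have Bu' : B^T \in unitmx by rewrite unitmx_tr.
  by rewrite -[LHS](mulKmx Bu') hy mulmx0.
have x0 : Th *m (B^T *m (Th^T *m (diag_mx e *m (Th *m v)))) != 0.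
  by apply/eqP => /Th_inj /eqP; rewrite (negbTE y0).
apply/eqP => hd; move/eqP: x0; apply.
apply/matrixP => i j; have := congr1 (fun X : 'M[R]_(n, 1) => X i j) hd.
rewrite mul_diag_mx !mxE => /eqP; rewrite mulf_eq0 gt_eqF //= => /eqP ->.
done.
Qed.

Definition Mm := Th^T *m Pm *m Th.

Lemma M_ge0 i j : 0 <= Mm i j.
Proof.
rewrite mxE; apply: sumr_ge0 => k _; apply: mulr_ge0; last by rewrite mxE divr_ge0 ?sqrtr_ge0.
rewrite mxE; apply: sumr_ge0 => l _; rewrite mulr_ge0 ?P_ge0 //.
by rewrite !mxE divr_ge0 ?sqrtr_ge0.
Qed.

Lemma Mu : Mm *m uu = uu.
Proof. by rewrite /Mm -mulmxA Thu -mulmxA P1 Th1. Qed.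

End Conc.

Lemma sub4 (V : zmodType) (a b c d : V) : (a - b) - (c - d) = (a - c) - (b - d).
Proof. by rewrite !opprB addrACA [RHS]addrACA [- b + _]addrC. Qed.

Section Abstract.
Variables (R : realType) (r : nat) (M N C : 'M[R]_r) (u : 'cV[R]_r) (q : R).
Hypotheses (Mge0 : forall i j, 0 <= M i j) (Nge0 : forall i j, 0 <= N i j)
  (Mu : M *m u = u) (Nu : N *m u = u) (upos : forall k, 0 < u k 0)
  (q0 : 0 <= q) (q1 : q < 1).

Definition T (X : 'M[R]_r) := (q / 2) *: (M *m X *m M^T + N *m X *m N^T).
Definition b (X : 'M[R]_r) (w v : 'cV[R]_r) := (w^T *m X *m v) 0 0.
Definition s (v : 'cV[R]_r) := \sum_k `|v k 0| * u k 0.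

Lemma bE X w v : b X w v = \sum_a \sum_c w a 0 * X a c * v c 0.
Proof.
rewrite /b mxE; under eq_bigr do rewrite mxE big_distrl.
rewrite exchange_big; apply: eq_bigr => a _; apply: eq_bigr => c _.
by rewrite !mxE.
Qed.

Lemma bT X w v : b (T X) w v = q / 2 * (b X (M^T *m w) (M^T *m v) + b X (N^T *m w) (N^T *m v)).
Proof.
rewrite /b /T -scalemxAr -scalemxAl mxE; congr (_ * _).
rewrite mulmxDr mulmxDl mxE !trmx_mul !trmxK !mulmxA.
by [].
Qed.

Lemma sge0 v : 0 <= s v.
Proof. by apply: sumr_ge0 => k _; rewrite mulr_ge0 // ltW. Qed.

Lemma s_contr (K : 'M[R]_r) : (forall i j, 0 <= K i j) -> K *m u = u ->
  forall v, s (K^T *m v) <= s v.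
Proof.
move=> Kge0 Ku v; rewrite /s.
apply: (@le_trans _ _ (\sum_k \sum_a K a k * `|v a 0| * u k 0)).
  apply: ler_sum => k _; rewrite mxE.
  apply: (le_trans (ler_wpM2r (ltW (upos k)) (ler_norm_sum _ _ _))).
  rewrite big_distrl /=; apply: ler_sum => a _.
  by rewrite !mxE normrM (ger0_norm (Kge0 _ _)).
rewrite exchange_big /=; apply: ler_sum => a _.
rewrite -{2}Ku mxE big_distrr /=; apply: ler_sum => k _.
by rewrite mulrCA mulrA.
Qed.

Lemma base X : exists c, 0 <= c /\ forall w v, `|b X w v| <= c * s w * s v.
Proof.
set c := \sum_a \sum_d `|X a d| / (u a 0 * u d 0).
have hc a d : `|X a d| <= c * (u a 0 * u d 0).
  have upd : 0 < u a 0 * u d 0 by rewrite mulr_gt0.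
  rewrite -ler_pdivrMr // /c.
  rewrite (bigD1 a) //= (bigD1 d) //= -addrA ler_wpDr //.
  apply: addr_ge0; apply: sumr_ge0 => *; first by rewrite divr_ge0 // ltW // mulr_gt0.
  by apply: sumr_ge0 => *; rewrite divr_ge0 // ltW // mulr_gt0.
have c0 : 0 <= c.
  by apply: sumr_ge0 => a _; apply: sumr_ge0 => d _; rewrite divr_ge0 // ltW // mulr_gt0.
clearbody c.
exists c; split => // w v.
have -> : c * s w * s v = \sum_a \sum_d c * (`|w a 0| * u a 0) * (`|v d 0| * u d 0).
  rewrite /s [c * _]big_distrr /= big_distrl /=; apply: eq_bigr => a _.
  by rewrite big_distrr.
rewrite bE; apply: (le_trans (ler_norm_sum _ _ _)); apply: ler_sum => a _.
apply: (le_trans (ler_norm_sum _ _ _)); apply: ler_sum => d _.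
rewrite !normrM.
apply: (@le_trans _ _ (`|w a 0| * (c * (u a 0 * u d 0)) * `|v d 0|)).
  by rewrite ler_wpM2r // ler_wpM2l.
by rewrite le_eqVlt; apply/orP; left; apply/eqP; ring.
Qed.


Lemma bernoulli (h : R) (K : nat) : 0 <= h -> 1 + K%:R * h <= (1 + h) ^+ K.
Proof.
move=> h0; elim: K => [|K IH]; first by rewrite expr0 mul0r addr0.
rewrite exprS -natr1.
have e0 : 0 <= (1 + h) ^+ K by apply: exprn_ge0; lra.
have kh : 0 <= K%:R * h by rewrite mulr_ge0.
apply: (@le_trans _ _ ((1 + h) * (1 + K%:R * h))).
  have := mulr_ge0 kh h0.
  rewrite mulrDl mulrDr !mul1r mulr1 mulrDl mul1r; lra.
by rewrite ler_wpM2l //; lra.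
Qed.

Lemma geo_lim (x a : R) : (forall K, x <= q ^+ K * a) -> x <= 0.
Proof.
move=> H; rewrite leNgt; apply/negP => x0.
have a0 : 0 < a by have := H 0%N; rewrite expr0 mul1r => /(lt_le_trans x0).
case: (eqVneq q 0) => [q00|qn0].
  by have := H 1%N; rewrite q00 expr1 mul0r => /(lt_le_trans x0); rewrite ltxx.
have qp : 0 < q by rewrite lt_neqAle eq_sym qn0.
set h := (1 - q) / q.
have hp : 0 < h by rewrite /h divr_gt0 // subr_gt0.
have qh : q * (1 + h) = 1 by rewrite /h; field; rewrite qn0.
set K := Num.Def.archi_bound (a / (x * h)).
have hK : a / (x * h) < K%:R by apply: archi_boundP; rewrite divr_ge0 // ltW // mulr_gt0.
clearbody K h.
have := H K => HK.
have e1 : q ^+ K * (1 + h) ^+ K = 1 by rewrite -exprMn qh expr1n.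
have b1 := bernoulli K (ltW hp).
have xa : x * (1 + h) ^+ K <= a.
  have : x * (1 + h) ^+ K <= q ^+ K * a * (1 + h) ^+ K.
    by rewrite ler_wpM2r // exprn_ge0 // addr_ge0 // ltW.
  by rewrite mulrAC e1 mul1r.
have : a < x * (K%:R * h).
  move: hK; rewrite ltr_pdivrMr; [by rewrite mulrCA | exact: mulr_gt0].
have : x * (1 + K%:R * h) <= x * (1 + h) ^+ K by rewrite ler_wpM2l // ltW.
rewrite mulrDr mulr1; lra.
Qed.

Lemma Tsub X Y : T (X - Y) = T X - T Y.
Proof.
rewrite /T !(mulmxBl, mulmxBr) -scalerBr; congr (_ *: _).
by rewrite addrACA opprD.
Qed.

Lemma Ttr X : (T X)^T = T X^T.
Proof. by rewrite /T linearZ /= linearD /= !trmx_mul !trmxK !mulmxA. Qed.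

Lemma b_delta X i j : b X (delta_mx i 0) (delta_mx j 0) = X i j.
Proof. by rewrite /b trmx_delta -rowE -colE !mxE. Qed.

Lemma uniq0 X : X - T X = 0 -> X = 0.
Proof.
move=> /eqP; rewrite subr_eq0 => /eqP XT.
have [c [c0 Hc]] := base X.
have H : forall K w v, `|b X w v| <= q ^+ K * (c * s w * s v).
  elim=> [|K IH] w v; first by rewrite expr0 mul1r.
  rewrite XT bT normrM (ger0_norm (divr_ge0 q0 (ler0n _ 2))).
  apply: (le_trans (ler_wpM2l (divr_ge0 q0 (ler0n _ 2)) (ler_normD _ _))).
  have h1 := IH (M^T *m w) (M^T *m v).
  have h2 := IH (N^T *m w) (N^T *m v).
  have s1 := s_contr Mge0 Mu w. have s2 := s_contr Mge0 Mu v.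
  have s3 := s_contr Nge0 Nu w. have s4 := s_contr Nge0 Nu v.
  have g1 := sge0 (M^T *m w). have g2 := sge0 (M^T *m v).
  have g3 := sge0 (N^T *m w). have g4 := sge0 (N^T *m v).
  have m1 : c * s (M^T *m w) * s (M^T *m v) <= c * s w * s v.
    by rewrite -mulrA -[c * s w * _]mulrA ler_wpM2l // ler_pM.
  have m2 : c * s (N^T *m w) * s (N^T *m v) <= c * s w * s v.
    by rewrite -mulrA -[c * s w * _]mulrA ler_wpM2l // ler_pM.
  have qK : 0 <= q ^+ K by apply: exprn_ge0.
  have z1 := le_trans h1 (ler_wpM2l qK m1); have z2 := le_trans h2 (ler_wpM2l qK m2).
  set Z := q ^+ K * (c * s w * s v) in z1 z2 *.
  apply: (@le_trans _ _ (q / 2 * (Z + Z))); first by rewrite ler_wpM2l ?divr_ge0 // lerD.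
  rewrite (_ : q / 2 * (Z + Z) = q * Z); last by field.
  by rewrite /Z exprS mulrA.
apply/matrixP => i j; rewrite mxE -b_delta.
apply/eqP; rewrite -normr_le0; apply: (geo_lim (a := c * s (delta_mx i 0) * s (delta_mx j 0))).
by move=> K; apply: H.
Qed.

Lemma psd_sol X : X - T X = C -> (forall v, 0 <= b C v v) -> forall v, 0 <= b X v v.
Proof.
move=> XC Cpsd.
have XT : X = C + T X by rewrite -XC subrK.
have [c [c0 Hc]] := base X.
have H : forall K v, - b X v v <= q ^+ K * (c * s v * s v).
  elim=> [|K IH] v.
    by rewrite expr0 mul1r; apply: le_trans (Hc v v); rewrite -normrN ler_norm.
  have -> : b X v v = b C v v + b (T X) v v by rewrite {1}XT /b mulmxDr mulmxDl mxE.
  rewrite bT.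
  have h1 := IH (M^T *m v). have h2 := IH (N^T *m v).
  have s2 := s_contr Mge0 Mu v. have s4 := s_contr Nge0 Nu v.
  have g2 := sge0 (M^T *m v). have g4 := sge0 (N^T *m v).
  have m1 : c * s (M^T *m v) * s (M^T *m v) <= c * s v * s v.
    by rewrite -mulrA -[c * s v * _]mulrA ler_wpM2l // ler_pM.
  have m2 : c * s (N^T *m v) * s (N^T *m v) <= c * s v * s v.
    by rewrite -mulrA -[c * s v * _]mulrA ler_wpM2l // ler_pM.
  have qK : 0 <= q ^+ K by apply: exprn_ge0.
  have z1 := le_trans h1 (ler_wpM2l qK m1); have z2 := le_trans h2 (ler_wpM2l qK m2).
  set Z := q ^+ K * (c * s v * s v) in z1 z2 *.
  have cv := Cpsd v.
  apply: (@le_trans _ _ (q / 2 * (Z + Z))).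
    have q2 : 0 <= q / 2 by rewrite divr_ge0.
    have := ler_wpM2l q2 (lerD z1 z2).
    rewrite opprD mulrDr; lra.
  rewrite (_ : q / 2 * (Z + Z) = q * Z); last by field.
  by rewrite /Z exprS mulrA.
move=> v; rewrite -oppr_le0; exact: (geo_lim (H ^~ v)).
Qed.

Definition Lm : 'M[R]_(r * r) := 1%:M - (q / 2) *: (lin_mx (mulmx M) *m lin_mx (mulmxr M^T)
   + lin_mx (mulmx N) *m lin_mx (mulmxr N^T)).

Lemma LmE X : mxvec X *m Lm = mxvec (X - T X).
Proof.
rewrite /Lm mulmxBr mulmx1 -scalemxAr mulmxDr !mulmxA !mul_vec_lin /T linearB /= linearZ linearD /=.
rewrite [mxvec (_ *: _)]linearZ /= linearD /=. by rewrite linearD /= !scalerN -opprD -scalerDr.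
Qed.

Lemma Lm_unit : Lm \in unitmx.
Proof.
rewrite -row_free_unit -kermx_eq0; apply/eqP/row_matrixP => i; rewrite row0.
have := mulmx_ker Lm; move/(congr1 (row i)); rewrite row_mul row0.
rewrite -[row i _]vec_mxK LmE => /eqP; rewrite mxvec_eq0 => /eqP /uniq0 h.
by rewrite h linear0.
Qed.

Lemma abstract_main : C^T = C -> (forall v, 0 <= b C v v) ->
  exists X, [/\ X - T X = C, forall Y, Y - T Y = C -> Y = X, X^T = X,
    forall v, 0 <= b X v v &
    ((forall v, v != 0 -> 0 < b C v v) -> forall v, v != 0 -> 0 < b X v v)].
Proof.
move=> Csym Cpsd.
set X := vec_mx (mxvec C *m invmx Lm).
have sol : X - T X = C.
  apply: (can_inj mxvecK); rewrite -LmE /X vec_mxK mulmxKV //; exact: Lm_unit.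
have uni : forall Y, Y - T Y = C -> Y = X.
  move=> Y YC; apply/eqP; rewrite -subr_eq0; apply/eqP; apply: uniq0.
  rewrite Tsub.
  have -> : Y - X - (T Y - T X) = (Y - T Y) - (X - T X) by apply: sub4.
  by rewrite YC sol subrr.
have psdX := psd_sol sol Cpsd.
exists X; split => //.
  apply: uni; by rewrite -Ttr -linearB /= sol.
move=> Cpd v v0.
have XT : X = C + T X by rewrite -sol subrK.
have -> : b X v v = b C v v + b (T X) v v by rewrite {1}XT /b mulmxDr mulmxDl mxE.
rewrite bT; apply: ltr_wpDr; last exact: Cpd.
by rewrite mulr_ge0 ?divr_ge0 // addr_ge0.
Qed.

End Abstract.

Lemma quad_split (R : realType) m k (Th : 'M[R]_(m, k)) (P Q : 'M[R]_m) (v : 'cV[R]_k) :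
  v^T *m (Th^T *m (P *m P^T + Q *m Q^T) *m Th) *m v =
  (P^T *m Th *m v)^T *m (P^T *m Th *m v) + (Q^T *m Th *m v)^T *m (Q^T *m Th *m v).
Proof.
rewrite !mulmxDr !mulmxDl !trmx_mul !trmxK !mulmxA. by rewrite mulmxDr mulmxDl !mulmxA.
Qed.

Lemma symC (R : realType) m k (Th : 'M[R]_(m, k)) (P Q : 'M[R]_m) :
  (Th^T *m (P *m P^T + Q *m Q^T) *m Th)^T = Th^T *m (P *m P^T + Q *m Q^T) *m Th.
Proof.
by rewrite !trmx_mul trmxK linearD /= !trmx_mul !trmxK !mulmxA.
Qed.

Unset Implicit Arguments.

Theorem lemma4 (R : realType) (n r : nat) (blk : 'I_n -> 'I_r)
    (B : 'M[R]_r) (d1 d2 : 'rV[R]_n) (beta : R) :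
  (1 <= r)%N -> (r <= n)%N ->
  blocks_nonempty blk ->
  (forall k l, 0 <= B k l) ->
  (forall k, exists l, B k l != 0) ->
  (forall l, exists k, B k l != 0) ->
  (forall i, 0 < d1 0 i) -> (forall i, 0 < d2 0 i) ->
  let A := diag_mx d1 *m Theta R blk *m B *m (Theta R blk)^T *m diag_mx d2 in
  (forall i j, 0 <= A i j <= 1) ->
  let P := row_normalize A in
  let Q := row_normalize A^T in
  let M := (Theta R blk)^T *m P *m Theta R blk in
  let N := (Theta R blk)^T *m Q *m Theta R blk in
  beta ^+ 2 < 1 ->
  let F := fun X : 'M[R]_r =>
    X - (beta ^+ 2 / 2) *: (M *m X *m M^T + N *m X *m N^T) =
    (Theta R blk)^T *m (P *m P^T + Q *m Q^T) *m Theta R blk in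
  exists X : 'M[R]_r,
    [/\ F X, (forall Y, F Y -> Y = X), psd X & (B \in unitmx -> pd X)].
Proof.
move=> r1 rn ne B0 Brow Bcol d1p d2p A A01 P Q M N b1 F.
have BT0 : forall k l, 0 <= B^T k l by move=> k l; rewrite mxE.
have BTrow : forall k, exists l, B^T k l != 0.
  by move=> k; have [l hl] := Bcol k; exists l; rewrite mxE.
have AT : A^T = Amat blk B^T d2 d1.
  by rewrite /A /Amat !trmx_mul !tr_diag_mx trmxK !mulmxA.
have NE : N = Mm blk B^T d2 d1 by rewrite /N /Q AT.
set C := (Theta R blk)^T *m (P *m P^T + Q *m Q^T) *m Theta R blk.
have Mg : forall i j, 0 <= M i j by move=> i j; apply: M_ge0.
have Ng : forall i j, 0 <= N i j by move=> i j; rewrite NE; apply: M_ge0.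
have Mu' : M *m (@uu R _ _ blk) = (@uu R _ _ blk) by apply: Mu.
have Nu' : N *m (@uu R _ _ blk) = (@uu R _ _ blk) by rewrite NE; apply: Mu.
have up : forall k, 0 < (@uu R _ _ blk) k 0 by move=> k; rewrite mxE; apply: sq_pos.
have q0 : 0 <= beta ^+ 2 by apply: sqr_ge0.
have Csym : C^T = C.
  exact: symC.
have Cpsd : forall v, 0 <= b C v v.
  move=> v; rewrite /b /C quad_split mxE.
  by apply: addr_ge0; apply: sq_ge0.
have [X [sol uni sym psdX pdX]] := abstract_main Mg Ng Mu' Nu' up q0 b1 Csym Cpsd.
exists X; split => //.
move=> Bu; split => //; apply: pdX => v v0.
rewrite /b /C quad_split mxE; apply: ltr_pwDl; last exact: sq_ge0.
apply: sq_gt0; exact: PT_inj.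
Qed.
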